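(* For all real $a$ and $y>0$, $$\frac{\Gamma(a,y)}{\Gamma(a-1,y)}<\frac12\left[y+a+\sqrt{(y-a)^2+4y}\right]$$ and $$\Gamma(a,y)>\frac{2y^a e^{-y}}{y+1-a+\sqrt{(y-a-1)^2+4y}}.$$
   Context: $\Gamma(a,y)=\int_y^{\infty} t^{a-1}e^{-t}\,dt$ is the upper incomplete gamma function, defined for all real $a$ when $y>0$. *)

(* Defs.v *)
From Stdlib Require Import Reals.
From Coquelicot Require Import Coquelicot.
Open Scope R_scope.

Definition gamma_integrand (a t : R) : R := Rpower t (a - 1) * exp (- t).

(* Upper incomplete gamma function  Gamma(a,y) = \int_y^oo t^(a-1) e^(-t) dt
   (improper Riemann integral; converges for all real a when y > 0). *)
Definition upper_gamma (a y : R) : R :=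
  RInt_gen (gamma_integrand a) (at_point y) (Rbar_locally p_infty).

(* Main.v *)
Require Import Defs.
From Stdlib Require Import Reals Lra Classical.
From Coquelicot Require Import Coquelicot.
Open Scope R_scope.

Lemma expl (u v : R) : u <= v -> exp u <= exp v.
Proof. intros [H|H]. left; apply exp_increasing; auto. subst; lra. Qed.

Lemma ln_lt_self (u : R) : 0 < u -> ln u < u.
Proof.
  intros Hu. rewrite <- (ln_exp u) at 2. apply ln_increasing; auto.
  pose proof (exp_ineq1 u). lra.
Qed.

Lemma bound_ln (c y : R) : 0 < y -> exists K, forall t, y <= t -> c * ln t <= K + t / 2.
Proof.
  intros Hy. set (k := Rabs c + 1).
  assert (Hk : 0 < k) by (unfold k; pose proof (Rabs_pos c); lra).
  exists (k * (Rabs (ln (2 * k)) + Rabs (ln y))). intros t Ht.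
  assert (Ht0 : 0 < t) by lra.
  assert (Hcl : c * ln t <= k * Rabs (ln t)).
  { unfold k. pose proof (Rabs_pos (ln t)). pose proof (Rle_abs (c * ln t)).
    rewrite Rabs_mult in H0. nra. }
  pose proof (Rabs_pos (ln (2*k))). pose proof (Rabs_pos (ln y)).
  destruct (Rlt_or_le t 1) as [H1|H1].
  - assert (ln y <= ln t) by (apply ln_le; lra).
    assert (ln t < 0) by (rewrite <- ln_1; apply ln_increasing; lra).
    rewrite (Rabs_left (ln t)) in Hcl by lra.
    pose proof (Rle_abs (- ln y)) as Hq. rewrite Rabs_Ropp in Hq. nra.
  - assert (0 <= ln t) by (rewrite <- ln_1; apply ln_le; lra).
    rewrite (Rabs_right (ln t)) in Hcl by lra.
    assert (ln t = ln (2*k) + ln (t / (2*k))).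
    { rewrite <- ln_mult by (try apply Rdiv_lt_0_compat; lra). f_equal. field. lra. }
    pose proof (ln_lt_self (t / (2*k)) ltac:(apply Rdiv_lt_0_compat; lra)).
    pose proof (Rle_abs (ln (2*k))).
    assert (k * ln (t/(2*k)) <= t / 2).
    { assert (k * (t / (2*k)) = t/2) by (field; lra). nra. }
    nra.
Qed.
Lemma gen_of_lim (f : R -> R) (y l : R) :
  (forall b, y <= b -> ex_RInt f y b) ->
  (forall eps, 0 < eps -> exists M, forall b, M < b -> Rabs (RInt f y b - l) < eps) ->
  is_RInt_gen f (at_point y) (Rbar_locally p_infty) l.
Proof.
  intros Hex Hlim P [eps HP].
  destruct (Hlim eps (cond_pos eps)) as [M HM].
  apply Filter_prod with (fun x => x = y) (fun b => Rmax M y < b).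
  - reflexivity.
  - exists (Rmax M y); auto.
  - intros x b -> Hb. simpl. exists (RInt f y b). split.
    + apply (RInt_correct (V:=R_CompleteNormedModule)), Hex. pose proof (Rmax_r M y); lra.
    + apply HP. pose proof (Rmax_l M y). specialize (HM b ltac:(lra)).
      exact HM.
Qed.

Lemma gen_lim (f : R -> R) (y l : R) :
  is_RInt_gen f (at_point y) (Rbar_locally p_infty) l ->
  forall eps, 0 < eps -> exists M, forall b, M < b -> forall v, is_RInt f y b v -> Rabs (v - l) < eps.
Proof.
  intros H eps He.
  specialize (H (fun v => Rabs (v - l) < eps)).
  destruct H as [Q R HQ HR HP].
  - exists (mkposreal eps He). intros v Hv. exact Hv.
  - destruct HR as [M HM]. exists M. intros b Hb v Hv.
    destruct (HP y b HQ (HM b Hb)) as [w [Hw1 Hw2]]. simpl in Hw1.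
    apply (is_RInt_unique (V:=R_CompleteNormedModule)) in Hv. apply (is_RInt_unique (V:=R_CompleteNormedModule)) in Hw1. replace v with w by congruence. exact Hw2.
Qed.

Lemma lower (h : R -> R) (y l B : R) :
  (forall t, y <= t -> continuous h t) -> (forall t, y <= t -> 0 <= h t) ->
  is_RInt_gen h (at_point y) (Rbar_locally p_infty) l -> y <= B -> RInt h y B <= l.
Proof.
  intros Hc Hp Hg HB.
  assert (Hex : forall b, y <= b -> ex_RInt h y b).
  { intros b Hb. apply (ex_RInt_continuous (V:=R_CompleteNormedModule)). intros z Hz. apply Hc.
    rewrite Rmin_left in Hz by lra. lra. }
  destruct (Rle_or_lt (RInt h y B) l) as [H|H]; auto.
  destruct (gen_lim h y l Hg (RInt h y B - l) ltac:(lra)) as [M HM].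
  set (b := Rmax M B + 1).
  assert (Hb1 : M < b) by (unfold b; pose proof (Rmax_l M B); lra).
  assert (Hb2 : B < b) by (unfold b; pose proof (Rmax_r M B); lra).
  specialize (HM b Hb1 _ (RInt_correct (V:=R_CompleteNormedModule) _ _ _ (Hex b ltac:(lra)))).
  assert (RInt h y B <= RInt h y b).
  { rewrite <- (RInt_Chasles (V:=R_CompleteNormedModule) h y B b) by (auto; apply (ex_RInt_continuous (V:=R_CompleteNormedModule)); intros z Hz;
      apply Hc; rewrite Rmin_left in Hz by lra; lra).
    assert (0 <= RInt h B b).
    { apply RInt_ge_0; [lra| |]. apply (ex_RInt_continuous (V:=R_CompleteNormedModule)); intros z Hz;
      apply Hc; rewrite Rmin_left in Hz by lra; lra. intros; apply Hp; lra. }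
    simpl. change plus with Rplus. lra. }
  pose proof (Rle_abs (RInt h y b - l)). lra.
Qed.

Lemma gi_cont (a t : R) : 0 < t -> continuous (gamma_integrand a) t.
Proof.
  intros Ht. apply (ex_derive_continuous (V:=R_NormedModule)). unfold gamma_integrand, Rpower.
  auto_derive. lra.
Qed.

Lemma gi_pos (a t : R) : 0 < gamma_integrand a t.
Proof. unfold gamma_integrand, Rpower. apply Rmult_lt_0_compat; apply exp_pos. Qed.

Lemma mono (h : R -> R) (y b0 b : R) :
  (forall t, y <= t -> continuous h t) -> (forall t, y <= t -> 0 <= h t) ->
  y <= b0 -> b0 <= b -> RInt h y b0 <= RInt h y b.
Proof.
  intros Hc Hp H1 H2.
  assert (Hex : forall u v, y <= u -> u <= v -> ex_RInt h u v).
  { intros u v Hu Hv. apply (ex_RInt_continuous (V:=R_CompleteNormedModule)).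
    intros z Hz. apply Hc. rewrite Rmin_left in Hz by lra. lra. }
  rewrite <- (RInt_Chasles (V:=R_CompleteNormedModule) h y b0 b) by (apply Hex; lra).
  assert (0 <= RInt h b0 b).
  { apply RInt_ge_0; [lra| |]. apply Hex; lra. intros; apply Hp; lra. }
  simpl. change plus with Rplus. lra.
Qed.

Lemma conv (a y : R) : 0 < y ->
  exists l, is_RInt_gen (gamma_integrand a) (at_point y) (Rbar_locally p_infty) l.
Proof.
  intros Hy.
  destruct (bound_ln (a - 1) y Hy) as [K HK].
  set (g := gamma_integrand a).
  assert (Hc : forall t, y <= t -> continuous g t) by (intros; apply gi_cont; lra).
  assert (Hp : forall t, y <= t -> 0 <= g t) by (intros; left; apply gi_pos).
  assert (Hex : forall b, y <= b -> ex_RInt g y b).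
  { intros b Hb. apply (ex_RInt_continuous (V:=R_CompleteNormedModule)).
    intros z Hz. apply Hc. rewrite Rmin_left in Hz by lra. lra. }
  set (U := 2 * exp (K - y / 2)).
  assert (Hbd : forall b, y <= b -> RInt g y b <= U).
  { intros b Hb.
    assert (Hd : is_RInt (fun t => exp (K - t / 2)) y b
                   (minus (-2 * exp (K - b / 2)) (-2 * exp (K - y / 2)))).
    { apply (is_RInt_derive (V:=R_CompleteNormedModule) (fun t => -2 * exp (K - t / 2))).
      - intros x _. auto_derive; auto. change (-2 * (- (1 * / 2) * exp (K + - (x * / 2))) = exp (K - x / 2)). unfold Rminus, Rdiv; field.
      - intros x _. apply (ex_derive_continuous (V:=R_NormedModule)). auto_derive. auto. }
    apply (is_RInt_unique (V:=R_CompleteNormedModule)) in Hd.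
    apply Rle_trans with (RInt (fun t => exp (K - t / 2)) y b).
    - apply RInt_le; auto.
      + apply (ex_RInt_continuous (V:=R_CompleteNormedModule)). intros z _.
        apply (ex_derive_continuous (V:=R_NormedModule)). auto_derive. auto.
      + intros t Ht. unfold g, gamma_integrand, Rpower.
        replace (K - t / 2) with ((K + t / 2) + - t) by field.
        rewrite exp_plus. apply Rmult_le_compat_r. left; apply exp_pos.
        apply expl. apply HK. lra.
    - rewrite Hd. unfold U, minus, plus, opp. simpl. pose proof (exp_pos (K - b / 2)). lra. }
  set (E := fun x => exists b, y <= b /\ x = RInt g y b).
  assert (HEb : bound E) by (exists U; intros x [b [Hb ->]]; auto).
  assert (HEn : exists x, E x) by (exists (RInt g y y); exists y; split; auto; lra).
  destruct (completeness E HEb HEn) as [m [Hub Hlub]].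
  exists m. apply gen_of_lim; auto.
  intros eps He.
  assert (exists b0, y <= b0 /\ m - eps < RInt g y b0).
  { apply NNPP. intros Hn. assert (m <= m - eps); [|lra].
    apply Hlub. intros x [b [Hb ->]].
    destruct (Rle_or_lt (RInt g y b) (m - eps)) as [H|H]; auto.
    exfalso; apply Hn; exists b; auto. }
  destruct H as [b0 [Hb0 Hm]]. exists b0. intros b Hb.
  pose proof (mono g y b0 b Hc Hp Hb0 ltac:(lra)).
  assert (RInt g y b <= m) by (apply Hub; exists b; split; auto; lra).
  apply Rabs_def1; lra.
Qed.

Lemma ex1 (b t : R) : 0 < t -> exp ((b - 1) * ln t) = exp (b * ln t) * / t.
Proof.
  intros Ht. replace (b * ln t) with ((b - 1) * ln t + ln t) by ring.
  rewrite exp_plus, exp_ln by auto. field. lra.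
Qed.

Lemma ibp (b y : R) : 0 < y ->
  is_RInt_gen (fun t => gamma_integrand (b + 1) t - b * gamma_integrand b t)
    (at_point y) (Rbar_locally p_infty) (Rpower y b * exp (- y)).
Proof.
  intros Hy.
  set (P := fun t => - (exp (b * ln t) * exp (- t))).
  set (g := fun t => gamma_integrand (b + 1) t - b * gamma_integrand b t).
  assert (Hd : forall t, 0 < t -> is_derive P t (g t)).
  { intros t Ht. unfold P, g, gamma_integrand, Rpower.
    auto_derive; auto.
    replace (b + 1 - 1) with b by ring. rewrite (ex1 b t Ht).
    change (- (b * (1 * / t) * exp (b * ln t) * exp (- t) + exp (b * ln t) * (- (1) * exp (- t))) =
      exp (b * ln t) * exp (- t) - b * (exp (b * ln t) * / t * exp (- t))).
    field. lra. }
  assert (Hcg : forall t, 0 < t -> continuous g t).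
  { intros t Ht. unfold g. apply (ex_derive_continuous (V:=R_NormedModule)).
    unfold gamma_integrand, Rpower. auto_derive. lra. }
  assert (HI : forall B, y <= B -> is_RInt g y B (P B - P y)).
  { intros B HB.
    assert (H := is_RInt_derive (V:=R_CompleteNormedModule) P g y B).
    rewrite Rmin_left, Rmax_right in H by lra.
    unfold minus, plus, opp in H; simpl in H.
    replace (P B - P y) with (P B + - P y) by ring. apply H.
    - intros x Hx; apply Hd; lra.
    - intros x Hx; apply Hcg; lra. }
  apply gen_of_lim.
  - intros B HB. eexists; apply HI; auto.
  - intros eps He.
    destruct (bound_ln b y Hy) as [K HK].
    exists (Rmax y (2 * (K - ln eps))). intros B HB.
    pose proof (Rmax_l y (2 * (K - ln eps))). pose proof (Rmax_r y (2 * (K - ln eps))).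
    rewrite (is_RInt_unique (V:=R_CompleteNormedModule) _ _ _ _ (HI B ltac:(lra))).
    unfold P, Rpower.
    replace (- (exp (b * ln B) * exp (- B)) - - (exp (b * ln y) * exp (- y)) - exp (b * ln y) * exp (- y))
      with (- (exp (b * ln B) * exp (- B))) by ring.
    rewrite Rabs_Ropp, Rabs_right by (left; apply Rmult_lt_0_compat; apply exp_pos).
    rewrite <- exp_plus. rewrite <- (exp_ln eps He). apply exp_increasing.
    specialize (HK B ltac:(lra)). lra.
Qed.

Lemma G_spec (b y : R) : 0 < y ->
  is_RInt_gen (gamma_integrand b) (at_point y) (Rbar_locally p_infty) (upper_gamma b y).
Proof.
  intros Hy. destruct (conv b y Hy) as [l Hl].
  unfold upper_gamma. rewrite (is_RInt_gen_unique _ _ Hl). exact Hl.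
Qed.

Lemma G_pos (b y : R) : 0 < y -> 0 < upper_gamma b y.
Proof.
  intros Hy.
  apply Rlt_le_trans with (RInt (gamma_integrand b) y (y + 1)).
  - apply RInt_gt_0; [lra| |].
    + intros; apply gi_pos.
    + intros; apply gi_cont; lra.
  - apply lower; [intros; apply gi_cont; lra| intros; left; apply gi_pos| apply G_spec; auto| lra].
Qed.

Lemma recur (b y : R) : 0 < y ->
  upper_gamma (b + 1) y - b * upper_gamma b y = Rpower y b * exp (- y).
Proof.
  intros Hy.
  pose proof (is_RInt_gen_unique _ _ (ibp b y Hy)) as H1.
  pose proof (is_RInt_gen_unique _ _ (is_RInt_gen_minus _ _ _ _
     (G_spec (b + 1) y Hy) (is_RInt_gen_scal _ b _ (G_spec b y Hy)))) as H2.
  exact (eq_trans (eq_sym H2) H1).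
Qed.

Lemma ex2 (c t : R) : 0 < t -> exp ((c + 1) * ln t) = exp (c * ln t) * t.
Proof.
  intros Ht. replace ((c + 1) * ln t) with (c * ln t + ln t) by ring.
  rewrite exp_plus, exp_ln by auto. reflexivity.
Qed.

Lemma CS (a y : R) : 0 < y ->
  upper_gamma a y ^ 2 < upper_gamma (a + 1) y * upper_gamma (a - 1) y.
Proof.
  intros Hy.
  set (g0 := upper_gamma (a - 1) y). set (g1 := upper_gamma a y). set (g2 := upper_gamma (a + 1) y).
  assert (H0 : 0 < g0) by (apply G_pos; auto).
  set (lam := g1 / g0).
  set (h := fun t => gamma_integrand (a + 1) t - 2 * lam * gamma_integrand a t
                      + lam ^ 2 * gamma_integrand (a - 1) t).
  assert (Hh : is_RInt_gen h (at_point y) (Rbar_locally p_infty) (g2 - 2 * lam * g1 + lam ^ 2 * g0)).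
  { exact (is_RInt_gen_plus _ _ _ _ (is_RInt_gen_minus _ _ _ _
       (G_spec (a + 1) y Hy) (is_RInt_gen_scal _ (2 * lam) _ (G_spec a y Hy)))
       (is_RInt_gen_scal _ (lam ^ 2) _ (G_spec (a - 1) y Hy))). }
  assert (Hform : forall t, 0 < t -> h t = Rpower t (a - 2) * exp (- t) * (t - lam) ^ 2).
  { intros t Ht. unfold h, gamma_integrand, Rpower.
    replace (a + 1 - 1) with ((a - 2 + 1) + 1) by ring.
    replace (a - 1) with (a - 2 + 1) by ring.
    replace (a - 2 + 1 - 1) with (a - 2) by ring.
    rewrite !ex2 by auto. ring. }
  assert (Hc : forall t, y <= t -> continuous h t).
  { intros t Ht. unfold h. apply (ex_derive_continuous (V:=R_NormedModule)).
    unfold gamma_integrand, Rpower. auto_derive. lra. }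
  assert (Hp : forall t, y <= t -> 0 <= h t).
  { intros t Ht. rewrite Hform by lra. apply Rmult_le_pos.
    - left; unfold Rpower; apply Rmult_lt_0_compat; apply exp_pos.
    - apply pow2_ge_0. }
  assert (Hpos : forall t, 0 < t -> t <> lam -> 0 < h t).
  { intros t Ht Hne. rewrite Hform by lra. apply Rmult_lt_0_compat.
    - unfold Rpower; apply Rmult_lt_0_compat; apply exp_pos.
    - assert (t - lam <> 0) by lra. pose proof (pow2_gt_0 _ H). exact H1. }
  assert (Hl : 0 < g2 - 2 * lam * g1 + lam ^ 2 * g0).
  { destruct (Rle_or_lt lam y) as [Hly|Hly].
    - apply Rlt_le_trans with (RInt h y (y + 1)).
      + apply RInt_gt_0; [lra| |].
        * intros x Hx. apply Hpos; lra.
        * intros; apply Hc; lra.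
      + apply lower; auto; lra.
    - apply Rlt_le_trans with (RInt h y lam).
      + apply RInt_gt_0; [lra| |].
        * intros x Hx. apply Hpos; lra.
        * intros; apply Hc; lra.
      + apply lower; auto; lra. }
  unfold lam in Hl.
  assert (0 < g0 * (g2 - 2 * (g1 / g0) * g1 + (g1 / g0) ^ 2 * g0)) by (apply Rmult_lt_0_compat; auto).
  replace (g0 * (g2 - 2 * (g1 / g0) * g1 + (g1 / g0) ^ 2 * g0)) with (g2 * g0 - g1 ^ 2) in H by (field; lra).
  lra.
Qed.

Lemma ratio (a y : R) : 0 < y ->
  upper_gamma a y / upper_gamma (a - 1) y < / 2 * (y + a + sqrt ((y - a) ^ 2 + 4 * y)).
Proof.
  intros Hy.
  pose proof (CS a y Hy) as Hcs.
  pose proof (recur (a - 1) y Hy) as R1. replace (a - 1 + 1) with a in R1 by ring.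
  pose proof (recur a y Hy) as R2.
  replace (Rpower y a) with (Rpower y (a - 1) * y) in R2
    by (rewrite <- (Rpower_1 y) at 2 by auto; rewrite <- Rpower_plus; f_equal; ring).
  set (g0 := upper_gamma (a - 1) y) in *. set (g1 := upper_gamma a y) in *.
  set (g2 := upper_gamma (a + 1) y) in *.
  assert (H0 : 0 < g0) by (apply G_pos; auto).
  set (r := g1 / g0).
  assert (Hq : r ^ 2 - (a + y) * r + y * (a - 1) < 0).
  { assert (E : g0 ^ 2 * (r ^ 2 - (a + y) * r + y * (a - 1)) = g1 ^ 2 - g2 * g0).
    { unfold r. assert (g2 = a * g1 + y * (g1 - (a - 1) * g0)) by nra.
      rewrite H. field. lra. }
    assert (0 < g0 ^ 2) by (apply pow_lt; auto). nra. }
  set (D := (y - a) ^ 2 + 4 * y).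
  assert (HD : 0 < D) by (unfold D; pose proof (pow2_ge_0 (y - a)); lra).
  assert (Hx : (2 * r - (a + y)) ^ 2 < D) by (unfold D; nra).
  pose proof (sqrt_pos D). pose proof (sqrt_sqrt D ltac:(lra)).
  assert (2 * r - (a + y) < sqrt D).
  { destruct (Rlt_or_le (2 * r - (a + y)) (sqrt D)) as [H3|H3]; auto. nra. }
  lra.
Qed.

Theorem corollary8 (a y : R) (hy : 0 < y) :
  upper_gamma a y / upper_gamma (a - 1) y
    < / 2 * (y + a + sqrt ((y - a) ^ 2 + 4 * y))
  /\
  upper_gamma a y
    > 2 * Rpower y a * exp (- y) / (y + 1 - a + sqrt ((y - a - 1) ^ 2 + 4 * y)).
Proof.
  split; [apply ratio; auto|].
  pose proof (ratio (a + 1) y hy) as Hr.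
  replace (a + 1 - 1) with a in Hr by ring.
  replace (y - (a + 1)) with (y - a - 1) in Hr by ring.
  pose proof (recur a y hy) as R.
  pose proof (G_pos a y hy) as H0.
  set (g1 := upper_gamma a y) in *. set (g2 := upper_gamma (a + 1) y) in *.
  set (S := sqrt ((y - a - 1) ^ 2 + 4 * y)) in *.
  set (E := Rpower y a * exp (- y)) in *.
  assert (HE : 0 < E) by (unfold E, Rpower; apply Rmult_lt_0_compat; apply exp_pos).
  assert (Hlt : E / g1 < / 2 * (y + 1 - a + S)).
  { assert (Hg2 : g2 = a * g1 + E) by lra.
    replace (E / g1) with (g2 / g1 - a) by (rewrite Hg2; field; lra).
    lra. }
  assert (Hd : 0 < y + 1 - a + S).
  { assert (0 < E / g1) by (apply Rdiv_lt_0_compat; auto). lra. }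
  unfold E in *. apply Rlt_gt.
  apply Rmult_lt_reg_r with ((y + 1 - a + S) / g1). apply Rdiv_lt_0_compat; auto.
  replace (2 * Rpower y a * exp (- y) / (y + 1 - a + S) * ((y + 1 - a + S) / g1))
    with (2 * (Rpower y a * exp (- y) / g1)) by (field; lra).
  replace (g1 * ((y + 1 - a + S) / g1)) with (y + 1 - a + S) by (field; lra).
  lra.
Qed.
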